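(* In the standing setup, let $T$ be a valid partial table, let $T(i,b)=\emptyset$, let $c$ be a column, and suppose there are $r$ distinct $(i,b)$-addable elements in $B_{i,c}$. Then either one of these elements $x$ satisfies that $C_c+x$ is independent, or there are at least $r$ positions in column $c$ that are $(i,b)$-removable.
   Context: Standing setup: $M$ is a matroid of rank $n$ on ground set $E$; $f\le n$ is a positive integer; for each $i\in\{1,\dots,f\}$ and $j\in\{1,\dots,n\}$, $B_{i,j}$ is a basis of $M$, and the sets $B_{i,j}$ are pairwise disjoint. A valid partial table $T$ assigns to each position $(i,j)\in[f]\times[n]$ either the symbol $\emptyset$ (the position is empty) or an element $T(i,j)\in B_{i,j}$, such that for every row $i$ the set $S_i=\{T(i,j):T(i,j)\ne\emptyset\}$ is independent and for every column $j$ the set $C_j=\{T(i,j):T(i,j)\neq\emptyset\}$ is independent. Notation: for a set $A$ and an element $z$, ''$A+z$ is independent'' means $z\notin A$ and $A\cup\{z\}$ is independent; $A-z$ denotes $A\setminus\{z\}$ for $z\in A$; expressions such as $A-z+w$ are read left to right with the same convention. Definitions (with $T(i,b)=\emptyset$): an element $x\in B_{i,c}$ is $(i,b)$-addable if either (1) $T(i,c)=\emptyset$ and both $S_i+x$ and $C_c+x$ are independent, or (2) $T(i,c)=x'\neq\emptyset$ and there is $y\in B_{i,b}$ such that $C_b+y$ and $S_i-x'+y+x$ are independent. A position $(j,c)$ with $T(j,c)=y'\neq\emptyset$ is $(i,b)$-removable if there is an $(i,b)$-addable element $x\in B_{i,c}$ such that $C_c-y'+x$ is independent. *)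

(* Defs.v *)
From mathcomp Require Import all_boot.
Set Implicit Arguments. Unset Strict Implicit. Unset Printing Implicit Defensive.

Section Matroids.
Variable E : finType.
Variable indep : {set E} -> bool.

Definition is_matroid : Prop :=
  [/\ indep set0,
      (forall A B : {set E}, A \subset B -> indep B -> indep A) &
      (forall A B : {set E}, indep A -> indep B -> #|A| < #|B| ->
          exists2 x, x \in B :\: A & indep (x |: A))].

Definition is_basis (B : {set E}) : Prop :=
  indep B /\ forall X : {set E}, B \proper X -> ~~ indep X.

Definition has_rank (n : nat) : Prop :=
  forall B, is_basis B -> #|B| = n.

Definition plus_indep (A : {set E}) (z : E) : bool :=
  (z \notin A) && indep (z |: A).

Variables f n : nat.
Variable B : 'I_f -> 'I_n -> {set E}.
Variable T : 'I_f -> 'I_n -> option E.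

Definition rowset (i : 'I_f) : {set E} := [set x | [exists j, T i j == Some x]].
Definition colset (j : 'I_n) : {set E} := [set x | [exists i, T i j == Some x]].

Definition valid_table : Prop :=
  [/\ (forall i j x, T i j = Some x -> x \in B i j),
      (forall i, indep (rowset i)) &
      (forall j, indep (colset j))].

Definition addable (i : 'I_f) (b c : 'I_n) (x : E) : Prop :=
  x \in B i c /\
  match T i c with
  | None => plus_indep (rowset i) x && plus_indep (colset c) x
  | Some x' =>
      exists2 y, y \in B i b &
        plus_indep (colset b) y /\
        (* S_i - x' + y + x, read left to right *)
        (y \notin rowset i :\ x') /\ plus_indep (y |: (rowset i :\ x')) x
  end.

Definition removable (i : 'I_f) (b : 'I_n) (j : 'I_f) (c : 'I_n) : Prop :=
  exists y', T j c = Some y' /\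
    exists x, addable i b c x /\ plus_indep (colset c :\ y') x.

End Matroids.

(* Main.v *)
Require Import Defs.
From mathcomp Require Import all_boot.

Theorem mainTheorem5 (E : finType) (indep : {set E} -> bool) (n f : nat)
  (B : 'I_f -> 'I_n -> {set E}) (T : 'I_f -> 'I_n -> option E)
  (i : 'I_f) (b c : 'I_n) (r : nat) (X : {set E}) :
  is_matroid indep -> has_rank indep n ->
  0 < f -> f <= n ->
  (forall i j, is_basis indep (B i j)) ->
  (forall i j i' j', (i, j) != (i', j') -> [disjoint B i j & B i' j']) ->
  valid_table indep B T ->
  T i b = None ->
  #|X| = r ->
  (forall x, x \in X -> addable indep B T i b c x) ->
  (exists2 x, x \in X & plus_indep indep (colset T c) x) \/
  (exists R : {set 'I_f}, r <= #|R| /\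
     forall j, j \in R -> removable indep B T i b j c).
Proof.
move=> [H0 Hsub Haug] _ _ _ Hbas _ [_ _ Hcol] _ HX Hadd.
set A := colset T c.
case: (boolP [exists x in X, plus_indep indep A x]) => [/exists_inP [x xX hx]|hno].
  by left; exists x.
right.
have XB : X \subset B i c by apply/subsetP => x /Hadd [].
have indX : indep X by apply: (Hsub _ _ XB); case: (Hbas i c).
pose P (M : {set E}) := [&& X \subset M, M \subset X :|: A & indep M].
have PX : P X by rewrite /P subxx subsetUl indX.
case: (@arg_maxnP {set E} X P (fun M => #|M|) PX) => M /and3P [XM MXA indM] Mmax.
have hA := Hcol c.
have leAM : #|A| <= #|M|.
  rewrite leqNgt; apply/negP => lt.
  have [a /setDP [aA aM] inda] := Haug _ _ indM hA lt.
  have := Mmax (a |: M); rewrite /P inda (subset_trans XM (subsetUr _ _)) /=.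
  rewrite subUset sub1set inE aA orbT MXA => /(_ isT).
  by rewrite cardsU1 aM /= add1n ltnn.
have leMA : #|M| <= #|A|.
  rewrite leqNgt; apply/negP => lt.
  have [z /setDP [zM zA] indz] := Haug _ _ hA indM lt.
  move/existsPn: hno => /(_ z).
  have : z \in X :|: A by apply: (subsetP MXA).
  rewrite inE (negbTE zA) orbF => zX.
  by rewrite zX /plus_indep zA indz.
set A' := M :\: X.
have A'A : A' \subset A.
  apply/subsetP => z /setDP [zM zX].
  by move: (subsetP MXA z zM); rewrite inE (negbTE zX).
have key : forall y, y \in A :\: A' ->
    exists x, addable indep B T i b c x /\ plus_indep indep (A :\ y) x.
  move=> y /setDP [yA yA'].
  have indAy : indep (A :\ y) by apply: (Hsub _ _ (subD1set _ _) hA).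
  have lt : #|A :\ y| < #|M|.
    have := cardsD1 y A; rewrite yA add1n => eA.
    by rewrite -eA.
  have [z /setDP [zM zAy] indz] := Haug _ _ indAy indM lt.
  case zX: (z \in X).
    by exists z; split; [apply: Hadd | rewrite /plus_indep zAy indz].
  have zA' : z \in A' by rewrite inE zX zM.
  have zA : z \in A by apply: (subsetP A'A).
  move: zAy; rewrite in_setD1 zA andbT negbK => /eqP zy.
  by move: yA'; rewrite -zy zA'.
pose R := [set j | [exists y in A :\: A', T j c == Some y]].
exists R; split.
  have cardD : #|A :\: A'| = r.
    have eAM : #|A| = #|M| by apply/eqP; rewrite eqn_leq leAM leMA.
    have rM : r <= #|M| by rewrite -HX; apply: subset_leq_card.
    by rewrite cardsD (setIidPr A'A) /A' cardsD (setIidPr XM) HX eAM subKn.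
  pose S : {set option E} := [set Some y | y in A :\: A'].
  have ci : #|S| = #|A :\: A'| by apply: card_imset; exact: Some_inj.
  have sub : S \subset [set T j c | j in R].
    apply/subsetP => o /imsetP [y yD ->].
    have : y \in A by move: yD => /setDP [].
    rewrite /A /colset inE => /existsP [j /eqP Tj].
    apply/imsetP; exists j => //.
    by rewrite inE; apply/exists_inP; exists y => //; rewrite Tj.
  have h1 := subset_leq_card sub.
  have h2 : #|[set T j c | j in R]| <= #|R| := leq_imset_card _ _.
  rewrite -cardD -ci; exact: leq_trans h1 h2.
move=> j; rewrite inE => /exists_inP [y yD /eqP Tj].
exists y; split => //.
exact: key.
Qed.
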